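(* Let $p\ge5$ be prime, $i,j\in\mathbb{N}_0$, $a\in\{2,\dots,(p-1)/2\}$, and let $o_a$ be the multiplicative order of $a(1-a)^{-1}$ in $(\mathbb{Z}/p\mathbb{Z})^*$. Then the $\mathbb{Z}_p$-submodule $\vartheta_a(\mathfrak{p}^i\wedge\mathfrak{p}^j)$ of $K$ (spanned by all $\vartheta_a(x\wedge y)$, $x\in\mathfrak{p}^i$, $y\in\mathfrak{p}^j$) equals $\mathfrak{p}^{i+j+\epsilon(i,j)}$, where $\epsilon(i,j)=1$ if $o_a\mid(i-j)$ and $\epsilon(i,j)=0$ otherwise. In particular $\vartheta_a(\mathfrak{p}^i\wedge\mathfrak{p}^i)=\mathfrak{p}^{2i+1}$, so the restriction of $\vartheta_a$ lies in $\hat H_i$ for all $i\in\mathbb{N}_0$.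
   Context: Let $\theta$ be a primitive $p$-th root of unity, $K=\mathbb{Q}_p(\theta)$, $\mathcal{O}$ its ring of integers, $\mathfrak{p}$ its maximal ideal; $\mathfrak{p}^j$ is the unique ideal of index $p^j$ in $\mathcal{O}$. For $j\in\mathbb{Z}$ prime to $p$, $\sigma_j$ is the Galois automorphism of $K$ with $\theta\mapsto\theta^j$. For $a\in\{2,\dots,(p-1)/2\}$, $\vartheta_a:K\wedge K\to K$ is defined by $\vartheta_a(x\wedge y)=\sigma_a(x)\sigma_{1-a}(y)-\sigma_{1-a}(x)\sigma_a(y)$. $P=\langle\theta\rangle$ acts by multiplication on ideals and diagonally on exterior squares; $\hat{H}_i=\{\gamma\in\mathrm{Hom}_P(\mathfrak{p}^i\wedge\mathfrak{p}^i,\mathfrak{p}^{2i+1}) \mid \gamma \text{ surjective}\}$. *)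

(* Defs.v *)
(* Model of K = Q_p(theta), its integers O = Z_p[theta],
   and the ideals p^k, built as inverse limits O = lim_n Z[X]/(p^n, Phi_p),
   Z_p = lim_n Z/p^n Z (no p-adic library is installed). *)
From HB Require Import structures.
From mathcomp Require Import all_boot all_order all_algebra.
Set Implicit Arguments. Unset Strict Implicit. Unset Printing Implicit Defensive.
Import Order.TTheory GRing.Theory Num.Theory.
Local Open Scope ring_scope.

Definition Phi (p : nat) : {poly int} := \sum_(k < p) 'X^k.

(* f = g in Z[X]/(p^n, Phi_p) = Z[theta]/p^n Z[theta] = O / p^n O. *)
Definition congO (p n : nat) (f g : {poly int}) : Prop :=
  exists q r : {poly int}, f - g = ((p ^ n)%N%:Z)%:P * q + Phi p * r.

Definition Oseq := nat -> {poly int}.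

(* x is a compatible sequence, i.e. an element of O = lim_n O/p^n O. *)
Definition isO (p : nat) (x : Oseq) : Prop :=
  forall n, congO p n (x n.+1) (x n).

Definition eqO (p : nat) (x y : Oseq) : Prop :=
  forall n, congO p n (x n) (y n).

(* c is an element of Z_p = lim_n Z/p^n Z. *)
Definition isZp (p : nat) (c : nat -> int) : Prop :=
  forall n, ((p ^ n)%N%:Z %| c n.+1 - c n)%Z.

Definition mulO (x y : Oseq) : Oseq := fun n => x n * y n.
Definition thetaO : Oseq := fun _ => 'X.

Definition sigmaO (j : nat) (x : Oseq) : Oseq := fun n => (x n) \Po 'X^j.

(* the ideal p^k = pi^k O, pi = 1 - theta a uniformizer of O *)
Definition pideal (p k : nat) (x : Oseq) : Prop :=
  isO p x /\ exists y, isO p y /\ eqO p x (fun n => (1 - 'X) ^+ k * y n).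

(* vartheta_a (x /\ y) = sigma_a(x) sigma_{1-a}(y) - sigma_{1-a}(x) sigma_a(y);
   sigma_{1-a} = sigma_{p+1-a} since theta^p = 1. *)
Definition varthetaO (p a : nat) (x y : Oseq) : Oseq :=
  fun n => sigmaO a x n * sigmaO (p + 1 - a) y n
           - sigmaO (p + 1 - a) x n * sigmaO a y n.

Definition thetaSpan (p a i j : nat) (z : Oseq) : Prop :=
  isO p z /\
  exists (m : nat) (c : 'I_m -> nat -> int) (x y : 'I_m -> Oseq),
    (forall k, isZp p (c k) /\ pideal p i (x k) /\ pideal p j (y k)) /\
    eqO p z (fun n => \sum_(k < m) (c k n)%:P * varthetaO p a (x k) (y k) n).

(* Main.v *)
Require Import Defs.
From HB Require Import structures.
From mathcomp Require Import all_boot all_order all_algebra.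
From mathcomp Require Import ring zify.
From Stdlib Require IndefiniteDescription.
Import Order.TTheory GRing.Theory Num.Theory.
Local Open Scope ring_scope.

Module Aux.
Set Implicit Arguments. Unset Strict Implicit. Unset Printing Implicit Defensive.

Section Ideal.
Variable p : nat.
Hypothesis pr : prime p.

Definition inI n (f : {poly int}) :=
  exists q r : {poly int}, f = ((p ^ n)%N%:Z)%:P * q + Phi p * r.

Lemma inI0 n : inI n 0.
Proof. by exists 0, 0; rewrite !mulr0 addr0. Qed.

Lemma inID n f g : inI n f -> inI n g -> inI n (f + g).
Proof.
move=> [q1 [r1 ->]] [q2 [r2 ->]]; exists (q1 + q2), (r1 + r2).
by rewrite !mulrDr addrACA.
Qed.

Lemma inIN n f : inI n f -> inI n (- f).
Proof.
move=> [q [r ->]]; exists (- q), (- r); by rewrite opprD !mulrN.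
Qed.

Lemma inIB n f g : inI n f -> inI n g -> inI n (f - g).
Proof. by move=> hf hg; apply: inID => //; apply: inIN. Qed.

Lemma inIMl n f g : inI n f -> inI n (g * f).
Proof.
move=> [q [r ->]]; exists (g * q), (g * r).
by rewrite mulrDr !mulrA ![g * _]mulrC.
Qed.

Lemma inIMr n f g : inI n f -> inI n (f * g).
Proof. by rewrite mulrC; apply: inIMl. Qed.

Lemma inIPhi n r : inI n (Phi p * r).
Proof. by exists 0, r; rewrite mulr0 add0r. Qed.

Lemma inI_le m n f : (m <= n)%N -> inI n f -> inI m f.
Proof.
move=> le [q [r ->]]; exists (((p ^ (n - m))%N%:Z)%:P * q), r.
by rewrite mulrA -polyCM -PoszM -expnD subnKC.
Qed.

Lemma inI_0 f : inI 0 f.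
Proof. by exists f, 0; rewrite expn0 mul1r mulr0 addr0. Qed.

Lemma inI_sum n (I : finType) (F : I -> {poly int}) :
  (forall i, inI n (F i)) -> inI n (\sum_i F i).
Proof.
move=> h; apply: (big_ind (inI n)) => //; [exact: inI0 | exact: inID].
Qed.

Lemma congE n f g : congO p n f g = inI n (f - g).
Proof. by []. Qed.

Lemma cong_refl n f : congO p n f f.
Proof. rewrite congE subrr; exact: inI0. Qed.

Lemma cong_sym n f g : congO p n f g -> congO p n g f.
Proof. by rewrite !congE => /inIN; rewrite opprB. Qed.

Lemma cong_trans n f g h : congO p n f g -> congO p n g h -> congO p n f h.
Proof.
rewrite !congE => h1 h2; have := inID h1 h2.
by rewrite addrA subrK.
Qed.

Lemma congD n f1 f2 g1 g2 : congO p n f1 g1 -> congO p n f2 g2 ->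
  congO p n (f1 + f2) (g1 + g2).
Proof.
rewrite !congE => h1 h2; have := inID h1 h2.
by rewrite opprD addrACA.
Qed.

Lemma congN n f g : congO p n f g -> congO p n (- f) (- g).
Proof. by rewrite !congE => /inIN; rewrite opprB opprK addrC. Qed.

Lemma congB n f1 f2 g1 g2 : congO p n f1 g1 -> congO p n f2 g2 ->
  congO p n (f1 - f2) (g1 - g2).
Proof. by move=> h1 h2; apply: congD => //; apply: congN. Qed.

Lemma congM n f1 f2 g1 g2 : congO p n f1 g1 -> congO p n f2 g2 ->
  congO p n (f1 * f2) (g1 * g2).
Proof.
rewrite !congE => h1 h2.
have -> : f1 * f2 - g1 * g2 = (f1 - g1) * f2 + g1 * (f2 - g2).
  by rewrite mulrBl mulrBr addrA subrK.
by apply: inID; [apply: inIMr | apply: inIMl].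
Qed.

Lemma congMl n f g h : congO p n f g -> congO p n (h * f) (h * g).
Proof. by move=> H; apply: congM => //; apply: cong_refl. Qed.

Lemma cong_le m n f g : (m <= n)%N -> congO p n f g -> congO p m f g.
Proof. by rewrite !congE; apply: inI_le. Qed.

Lemma cong_sum n (I : finType) (F G : I -> {poly int}) :
  (forall i, congO p n (F i) (G i)) -> congO p n (\sum_i F i) (\sum_i G i).
Proof.
move=> h; rewrite congE -sumrB; apply: inI_sum => i; exact: h.
Qed.

Lemma cong_Phi n f g r : f - g = Phi p * r -> congO p n f g.
Proof. by move=> e; rewrite congE e; apply: inIPhi. Qed.

End Ideal.


Definition Pi : {poly int} := 1 - 'X.
Definition E (e : nat) : {poly int} := \sum_(k < e) 'X^k.

Lemma PiE e : Pi * E e = 1 - 'X^e.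
Proof.
have h := subrX1 ('X : {poly int}) e; rewrite /Pi /E -[RHS]opprB h.
by rewrite -mulNr opprB.
Qed.

Lemma E1 e : (E e).[1] = e%:Z.
Proof.
rewrite /E horner_sum (eq_bigr (fun _ => 1)) => [|i _]; last by rewrite hornerXn expr1n.
by rewrite sumr_const card_ord natz.
Qed.

Lemma Pi1 : Pi.[1] = 0.
Proof. by rewrite /Pi hornerD hornerN hornerX hornerC subrr. Qed.

Lemma Pi_neq0 : Pi != 0.
Proof.
apply/negP => /eqP h; have := congr1 (fun q : {poly int} => q`_1) h.
by rewrite /Pi coefB coefC coefX /= sub0r coef0 => /eqP; rewrite oppr_eq0.
Qed.

Section PolyFacts.
Variable p : nat.
Hypothesis pr : prime p.

Lemma p_gt0 : (0 < p)%N. Proof. exact: prime_gt0. Qed.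

Lemma Phi_tel : 'X^p - 1 = ('X - 1) * Phi p.
Proof. exact: subrX1. Qed.

Lemma Phi1 : (Phi p).[1] = p%:Z.
Proof. exact: E1. Qed.

Lemma Xmod N : exists r, 'X^N - 'X^(N %% p) = Phi p * r.
Proof.
rewrite {1}(divn_eq N p) mulnC exprD exprM.
have := subrX1 ('X^p : {poly int}) (N %/ p) => h.
exists (('X - 1) * (\sum_(i < N %/ p) ('X^p) ^+ i) * 'X^(N %% p)).
have -> : ('X^p) ^+ (N %/ p) * 'X^(N %% p) - 'X^(N %% p) =
   (('X^p) ^+ (N %/ p) - 1) * 'X^(N %% p) :> {poly int}.
  by rewrite mulrBl mul1r.
rewrite h Phi_tel; ring.
Qed.

Lemma pPhi : exists T, (p%:Z)%:P = Phi p + Pi * T.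
Proof.
have : root (Phi p - (p%:Z)%:P) 1 by rewrite /root hornerD hornerN hornerC Phi1 subrr.
case/factor_theorem => T hT; exists T.
rewrite /Pi -opprB mulNr mulrC -hT.
by rewrite opprB addrC subrK.
Qed.

Lemma cancelP f g : Pi * f = Phi p * g -> exists g', f = Phi p * g'.
Proof.
move=> e.
have : root g 1.
  have := congr1 (horner^~ 1) e; rewrite !hornerM Pi1 mul0r Phi1 => /esym/eqP.
  rewrite mulf_eq0 => /orP[/eqP p0|//].
  by move: (prime_gt0 pr); move: p0; case: (p).
case/factor_theorem => g' hg; exists (- g').
apply: (mulfI Pi_neq0); rewrite e hg /Pi.
ring.
Qed.

Lemma inI_cancel n w : inI p n.+1 (Pi * w) -> inI p n w.
Proof.
case=> q [r e]; case: pPhi => T hT.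
have : Pi * (w - ((p ^ n)%N%:Z)%:P * q * T) = Phi p * (r + ((p ^ n)%N%:Z)%:P * q).
  rewrite mulrBr e expnS PoszM polyCM hT.
  ring.
case/cancelP => g' hg; exists (q * T), g'.
by rewrite -hg mulrA subrKC.
Qed.

Lemma inI_cancelk k n w : inI p (n + k) (Pi ^+ k * w) -> inI p n w.
Proof.
elim: k w => [|k IH] w; first by rewrite addn0 expr0 mul1r.
rewrite addnS exprS -mulrA => h; apply: IH; exact: inI_cancel h.
Qed.

Lemma Jlem f : (p%:Z %| f.[1])%Z -> exists g r, f = Pi * g + Phi p * r.
Proof.
case/dvdzP => h hh.
have : root (f - (f.[1])%:P) 1 by rewrite /root hornerD hornerN hornerC subrr.
case/factor_theorem => q hq; case: pPhi => T hT.
exists (- q + h%:P * T), h%:P.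
have -> : f = (f - (f.[1])%:P) + (f.[1])%:P by rewrite subrK.
rewrite hq hh polyCM hT /Pi; ring.
Qed.

Lemma Fp_eq m n : ((m%:R : 'F_p) == n%:R) = (m == n %[mod p]).
Proof. by rewrite -val_eqE /= !val_Fp_nat. Qed.

Lemma Fp_neq0 e : (0 < e < p)%N -> (e%:R : 'F_p) != 0.
Proof.
case/andP => e0 ep; apply/negP => /eqP h.
have := Fp_eq e 0; rewrite h eqxx mod0n modn_small // => /esym/eqP e00.
by rewrite e00 in e0.
Qed.

Lemma Fp_inv e : (0 < e < p)%N -> exists f : nat, ((e * f) %% p)%N = 1%N.
Proof.
move=> he; exists (val ((e%:R : 'F_p)^-1)).
have h1 : ((e * val ((e%:R : 'F_p)^-1))%:R : 'F_p) = 1%:R.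
  by rewrite natrM natr_Zp mulfV // Fp_neq0.
have := Fp_eq (e * val ((e%:R : 'F_p)^-1)) 1; rewrite h1 eqxx => /esym/eqP ->.
by rewrite modn_small // prime_gt1.
Qed.

Lemma Einv e : (0 < e < p)%N -> exists F r, E e * F - 1 = Phi p * r.
Proof.
move=> he; case: (Fp_inv he) => f hf.
exists (\sum_(k < f) ('X^e) ^+ k).
have h1 := subrX1 ('X^e : {poly int}) f.
case: (Xmod (e * f)) => r hr; rewrite hf in hr.
apply: (@cancelP _ (- r)).
have hx : 'X^(e * f) = Phi p * r + 'X by rewrite -hr expr1 subrK.
rewrite mulrBr mulrA PiE.
have -> : (1 - 'X^e) * \sum_(k < f) ('X^e) ^+ k = - ((('X^e) ^+ f) - 1) :> {poly int}
  by rewrite h1; ring.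
rewrite -exprM hx /Pi; ring.
Qed.

Lemma Phi_comp e : (0 < e < p)%N -> exists r, Phi p \Po 'X^e = Phi p * r.
Proof.
move=> he; case: (Einv he) => F [r hr].
have hS := subrX1 ('X^p : {poly int}) e.
have key : E e * (Phi p \Po 'X^e) = Phi p * \sum_(i < e) ('X^p) ^+ i.
  apply: (mulfI Pi_neq0).
  have -> : Pi * (E e * (Phi p \Po 'X^e)) = - ((('X - 1) * Phi p) \Po 'X^e).
    by rewrite rmorphM /= rmorphB /= comp_polyX rmorph1 mulrA PiE; ring.
  rewrite -Phi_tel rmorphB /= rmorph1 comp_Xn_poly -exprM mulnC exprM hS Phi_tel /Pi.
  ring.
exists (F * \sum_(i < e) ('X^p) ^+ i - r * (Phi p \Po 'X^e)).
have e1 : Phi p \Po 'X^e = F * (E e * (Phi p \Po 'X^e)) - (E e * F - 1) * (Phi p \Po 'X^e)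
  by ring.
rewrite {1}e1 key hr; ring.
Qed.

End PolyFacts.


Section Oseqs.
Variable p : nat.
Hypothesis pr : prime p.

Lemma cong_comp n e f g : (0 < e < p)%N -> congO p n f g ->
  congO p n (f \Po 'X^e) (g \Po 'X^e).
Proof.
move=> he; rewrite !congE -rmorphB => -[q [r ->]].
case: (Phi_comp pr he) => s hs.
exists (q \Po 'X^e), (s * (r \Po 'X^e)).
by rewrite rmorphD /= !rmorphM /= comp_polyC hs mulrA.
Qed.

Lemma isZp_cong c n : isZp p c -> congO p n (c n.+1)%:P (c n)%:P.
Proof.
move=> h; rewrite congE -polyCB; case/dvdzP: (h n) => k ->.
by exists k%:P, 0; rewrite mulr0 addr0 polyCM mulrC.
Qed.

Lemma isO_const f : isO p (fun _ => f).
Proof. move=> n; exact: cong_refl. Qed.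

Lemma isO_add x y : isO p x -> isO p y -> isO p (fun n => x n + y n).
Proof. by move=> hx hy n; apply: congD. Qed.

Lemma isO_opp x : isO p x -> isO p (fun n => - x n).
Proof. by move=> hx n; apply: congN. Qed.

Lemma isO_mul x y : isO p x -> isO p y -> isO p (fun n => x n * y n).
Proof. by move=> hx hy n; apply: congM. Qed.

Lemma isO_scale c x : isZp p c -> isO p x -> isO p (fun n => (c n)%:P * x n).
Proof. by move=> hc hx n; apply: congM => //; apply: isZp_cong. Qed.

Lemma isO_sum (I : finType) (x : I -> Oseq) :
  (forall i, isO p (x i)) -> isO p (fun n => \sum_i x i n).
Proof. by move=> h n; apply: cong_sum => i; apply: h. Qed.

Lemma eqO_refl x : eqO p x x.
Proof. move=> n; exact: cong_refl. Qed.

Lemma eqO_sym x y : eqO p x y -> eqO p y x.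
Proof. by move=> h n; apply: cong_sym. Qed.

Lemma eqO_trans x y z : eqO p x y -> eqO p y z -> eqO p x z.
Proof. by move=> h1 h2 n; apply: cong_trans (h1 n) (h2 n). Qed.

Lemma isO_le x m n : isO p x -> (m <= n)%N -> congO p m (x n) (x m).
Proof.
move=> hx /subnK <-; elim: (n - m)%N => [|k IH]; first exact: cong_refl.
apply: cong_trans IH; rewrite addSn; apply: cong_le (hx _); exact: leq_addl.
Qed.

Variable a : nat.
Hypothesis ha : (0 < a < p)%N.
Hypothesis hb : (0 < p + 1 - a < p)%N.

Definition vt (f g : {poly int}) :=
  (f \Po 'X^a) * (g \Po 'X^(p + 1 - a)) - (f \Po 'X^(p + 1 - a)) * (g \Po 'X^a).

Lemma vtE x y n : varthetaO p a x y n = vt (x n) (y n).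
Proof. by []. Qed.

Lemma cong_vt n f f' g g' : congO p n f f' -> congO p n g g' ->
  congO p n (vt f g) (vt f' g').
Proof.
move=> h1 h2; rewrite /vt; apply: congB; apply: congM;
  by apply: cong_comp.
Qed.

Lemma isO_vt x y : isO p x -> isO p y -> isO p (varthetaO p a x y).
Proof. by move=> hx hy n; rewrite !vtE; apply: cong_vt. Qed.

Lemma vtX f g : exists r, vt ('X * f) ('X * g) - 'X * vt f g = Phi p * r.
Proof.
exists ('X * ('X - 1) * vt f g).
have -> : vt ('X * f) ('X * g) = 'X^(a + (p + 1 - a)) * vt f g.
  rewrite /vt !rmorphM /= !comp_polyX exprD; ring.
have -> : (a + (p + 1 - a))%N = p.+1.
  case/andP: ha => _ /ltnW h; rewrite addnC subnK //; first by rewrite addn1.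
  by rewrite addn1 ltnW.
rewrite exprS.
have : 'X^p = ('X - 1) * Phi p + 1 :> {poly int} by rewrite -Phi_tel subrK.
move=> ->; ring.
Qed.

End Oseqs.


Section Span.
Variable p : nat.
Hypothesis pr : prime p.
Variable a : nat.
Hypothesis ha : (0 < a < p)%N.
Hypothesis hb : (0 < p + 1 - a < p)%N.
Variables i j : nat.

Notation span := (thetaSpan p a i j).

Lemma isZp_mul c d : isZp p c -> isZp p d -> isZp p (fun n => c n * d n).
Proof.
move=> hc hd n.
have -> : c n.+1 * d n.+1 - c n * d n = c n.+1 * (d n.+1 - d n) + (c n.+1 - c n) * d n.
  ring.
apply: rpredD; [exact: dvdz_mull | exact: dvdz_mulr].
Qed.

Lemma isZp_const c : isZp p (fun _ => c).
Proof. by move=> n; rewrite subrr dvdz0. Qed.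

Lemma span_isO z : span z -> isO p z.
Proof. by case. Qed.

Lemma span_eq z z' : span z -> isO p z' -> eqO p z z' -> span z'.
Proof.
move=> [hz [m [c [x [y [H e]]]]]] hz' ezz; split => //.
exists m, c, x, y; split => //; apply: eqO_trans e; exact: eqO_sym.
Qed.

Lemma span_ext z z' : span z -> (forall n, z n = z' n) -> span z'.
Proof.
move=> hs e; have hz := span_isO hs; apply: span_eq hs _ _.
  by move=> n; rewrite -!e; apply: hz.
by move=> n; rewrite e; apply: cong_refl.
Qed.

Lemma span_zero : span (fun _ => 0).
Proof.
split; first exact: isO_const.
exists 0%N, (fun _ _ => 0), (fun _ _ => 0), (fun _ _ => 0); split; first by case.
by move=> n; rewrite big_ord0; apply: cong_refl.
Qed.

Lemma span_add z1 z2 : span z1 -> span z2 -> span (fun n => z1 n + z2 n).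
Proof.
move=> [hz1 [m1 [c1 [x1 [y1 [H1 e1]]]]]] [hz2 [m2 [c2 [x2 [y2 [H2 e2]]]]]].
split; first exact: isO_add.
pose sel (T : Type) (f1 : 'I_m1 -> T) (f2 : 'I_m2 -> T) (k : 'I_(m1 + m2)) :=
  match split k with inl k1 => f1 k1 | inr k2 => f2 k2 end.
exists (m1 + m2)%N, (sel _ c1 c2), (sel _ x1 x2), (sel _ y1 y2); split.
  by move=> k; rewrite /sel; case: (split k) => k'; [apply: H1 | apply: H2].
move=> n; rewrite big_split_ord /=.
have sl k : split (lshift m2 k) = inl k := unsplitK (inl k).
have sr k : split (rshift m1 k) = inr k := unsplitK (inr k).
apply: congD.
  apply: cong_trans (e1 n) _; apply: cong_sum => k; rewrite /sel sl; exact: cong_refl.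
apply: cong_trans (e2 n) _; apply: cong_sum => k; rewrite /sel sr; exact: cong_refl.
Qed.

Lemma span_scale c z : isZp p c -> span z -> span (fun n => (c n)%:P * z n).
Proof.
move=> hc [hz [m [c1 [x [y [H e]]]]]]; split; first exact: isO_scale.
exists m, (fun k n => c n * c1 k n), x, y; split.
  by move=> k; case: (H k) => h1 h2; split => //; apply: isZp_mul.
move=> n; apply: cong_trans (congMl _ (e n)) _; rewrite mulr_sumr.
apply: cong_sum => k; rewrite polyCM mulrA; exact: cong_refl.
Qed.

Lemma pideal_X k x : pideal p k x -> pideal p k (fun n => 'X * x n).
Proof.
move=> [hx [y [hy e]]]; split; first by apply: isO_mul => //; apply: isO_const.
exists (fun n => 'X * y n); split; first by apply: isO_mul => //; apply: isO_const.
move=> n; apply: cong_trans (congMl _ (e n)) _.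
rewrite mulrA [_ * (1 - 'X) ^+ k]mulrC -mulrA; exact: cong_refl.
Qed.

Lemma span_X z : span z -> span (fun n => 'X * z n).
Proof.
move=> [hz [m [c [x [y [H e]]]]]]; split; first by apply: isO_mul => //; apply: isO_const.
exists m, c, (fun k n => 'X * x k n), (fun k n => 'X * y k n); split.
  by move=> k; case: (H k) => h1 [h2 h3]; split => //; split; apply: pideal_X.
move=> n; apply: cong_trans (congMl _ (e n)) _; rewrite mulr_sumr.
apply: cong_sum => k; rewrite !vtE mulrCA.
apply: congMl; apply: cong_sym.
case: (vtX ha (x k n) (y k n)) => r hr; exact: cong_Phi hr.
Qed.

Lemma span_Xk k z : span z -> span (fun n => 'X^k * z n).
Proof.
elim: k => [|k IH] hz.
  by apply: span_ext hz _ => n; rewrite expr0 mul1r.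
apply: span_ext (span_X (IH hz)) _ => n; rewrite exprS mulrA.
done.
Qed.

Lemma span_sum m (z : 'I_m -> Oseq) :
  (forall k, span (z k)) -> span (fun n => \sum_(k < m) z k n).
Proof.
elim: m z => [|m IH] z h.
  by apply: span_ext span_zero _ => n; rewrite big_ord0.
have := span_add (IH (fun k => z (widen_ord (leqnSn m) k)) (fun k => h _)) (h ord_max).
by move=> hs; apply: span_ext hs _ => n; rewrite big_ord_recr.
Qed.

Lemma span_gen x y : pideal p i x -> pideal p j y -> span (varthetaO p a x y).
Proof.
move=> hx hy; split; first by apply: isO_vt => //; [case: hx | case: hy].
exists 1%N, (fun _ _ => 1), (fun _ => x), (fun _ => y); split.
  by move=> k; split => //; apply: isZp_const.
by move=> n; rewrite big_ord1 mul1r; apply: cong_refl.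
Qed.

Lemma phi_monic : Phi p \is monic.
Proof.
have := monicXnsubC (1 : int) (prime_gt0 pr).
by rewrite -/1 Phi_tel monicMl // monicXsubC.
Qed.

Definition coord (u : {poly int}) (k : nat) : int :=
  (Pdiv.CommonRing.rmodp u (Phi p))`_k.

Lemma size_Phi : size (Phi p) = p.
Proof.
have h := Phi_tel p.
have : size ('X^p - 1 : {poly int}) = p.+1.
  by rewrite size_XnsubC // prime_gt0.
rewrite h size_monicM ?monicXsubC //; last exact: monic_neq0 phi_monic.
by rewrite size_XsubC => /eqP; rewrite eqSS => /eqP.
Qed.

Lemma coord_expand u : exists r,
  u - \sum_(k < p) (coord u k)%:P * 'X^k = Phi p * r.
Proof.
exists (Pdiv.CommonRing.rdivp u (Phi p)).
rewrite {1}(Pdiv.RingMonic.rdivp_eq phi_monic u) mulrC.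
have -> : \sum_(k < p) (coord u k)%:P * 'X^k = Pdiv.CommonRing.rmodp u (Phi p).
  have hs : (size (Pdiv.CommonRing.rmodp u (Phi p)) <= p)%N.
    have := Pdiv.CommonRing.ltn_rmodpN0 u (monic_neq0 phi_monic).
    by rewrite size_Phi => /ltnW.
  rewrite -[RHS]coefK (poly_def) /coord.
  rewrite (big_ord_widen _ (fun k => (Pdiv.CommonRing.rmodp u (Phi p))`_k *: 'X^k) hs).
  rewrite [RHS]big_mkcond /=; apply: eq_bigr => k _.
  rewrite mul_polyC; case: ifP => // hk.
  by rewrite nth_default ?scale0r // leqNgt hk.
by rewrite addrK.
Qed.

Lemma coord_isZp u k : isO p u -> isZp p (fun n => coord (u n) k).
Proof.
move=> hu n; case: (hu n) => q [r e]; rewrite /coord.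
rewrite -coefB -Pdiv.RingMonic.rmodpB ?phi_monic // e.
rewrite Pdiv.RingMonic.rmodpD ?phi_monic // [Phi p * r]mulrC Pdiv.RingMonic.rmodp_mull ?phi_monic //.
rewrite addr0 mul_polyC Pdiv.RingMonic.rmodpZ ?phi_monic // coefZ.
exact: dvdz_mulr.
Qed.

Lemma span_mul u z : isO p u -> span z -> span (mulO u z).
Proof.
move=> hu hz.
have hs : span (fun n => \sum_(k < p) (coord (u n) k)%:P * ('X^k * z n)).
  apply: span_sum => k; apply: span_scale; first exact: coord_isZp.
  exact: span_Xk.
apply: span_eq hs _ _; first by apply: isO_mul => //; apply: span_isO.
move=> n; rewrite /mulO.
under eq_bigr do rewrite mulrA.
rewrite -mulr_suml; apply: congM; last exact: cong_refl.
case: (coord_expand (u n)) => r hr; apply: cong_sym; exact: cong_Phi hr.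
Qed.

End Span.

Local Notation functional_choice := (@IndefiniteDescription.functional_choice _ _ _).

Section Main.
Variable p : nat.
Hypothesis pr : prime p.

Lemma div_lemma k z : isO p z ->
  (forall n, exists s, congO p n (z n) (Pi ^+ k * s)) -> pideal p k z.
Proof.
move=> hz h; case: (functional_choice h) => s hs.
split => //; exists (fun n => s (n + k)%N); split.
  move=> n; rewrite congE; apply: (@inI_cancelk p pr k); rewrite mulrBr -congE.
  have e1 := hs (n.+1 + k)%N; have e2 := hs (n + k)%N.
  apply: cong_trans (cong_sym (cong_le _ e1)) _; first by rewrite addSn leqnSn.
  apply: cong_trans _ e2; rewrite addSn; exact: cong_le (hz _) .
move=> n; apply: cong_trans (cong_le (leq_addr k n) (hs (n + k)%N)).
apply: cong_sym; apply: isO_le => //; exact: leq_addr.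
Qed.

Variable a : nat.
Hypothesis ha : (0 < a < p)%N.
Hypothesis hb : (0 < p + 1 - a < p)%N.
Variables i j : nat.

Local Notation b := (p + 1 - a)%N.

Definition Th (s t : {poly int}) :=
  (E a) ^+ i * (E b) ^+ j * (s \Po 'X^a) * (t \Po 'X^b)
  - (E b) ^+ i * (E a) ^+ j * (s \Po 'X^b) * (t \Po 'X^a).

Lemma comp_PiX k s e : (Pi ^+ k * s) \Po 'X^e = Pi ^+ k * ((E e) ^+ k * (s \Po 'X^e)).
Proof.
rewrite rmorphM /= rmorphXn /= /Pi rmorphB /= rmorph1 comp_polyX -PiE /Pi.
by rewrite exprMn mulrA.
Qed.

Lemma vt_Pi s t : vt p a (Pi ^+ i * s) (Pi ^+ j * t) = Pi ^+ (i + j) * Th s t.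
Proof. rewrite /vt /Th !comp_PiX exprD; ring. Qed.

Lemma Th1 s t : (Th s t).[1] = ((a ^ i * b ^ j)%N%:Z - (b ^ i * a ^ j)%N%:Z) * s.[1] * t.[1].
Proof.
rewrite /Th !(hornerE, horner_comp, hornerXn, expr1n, E1).
rewrite !PoszM -!natz !natrX; ring.
Qed.

Lemma spanA (e : nat) z : (e <= 1)%N ->
  (e = 1%N -> (p%:Z %| (a ^ i * b ^ j)%N%:Z - (b ^ i * a ^ j)%N%:Z)%Z) ->
  thetaSpan p a i j z -> pideal p (i + j + e) z.
Proof.
move=> he hdiv [hz [m [c [x [y [H ez]]]]]].
apply: div_lemma => // n.
pose Q := fun f => exists s, congO p n f (Pi ^+ (i + j + e) * s).
have QD f g : Q f -> Q g -> Q (f + g).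
  move=> [s1 h1] [s2 h2]; exists (s1 + s2); rewrite mulrDr; exact: congD.
have QM f g : Q f -> Q (g * f).
  move=> [s1 h1]; exists (g * s1); rewrite mulrCA; exact: congMl.
have QC f g : congO p n f g -> Q g -> Q f.
  move=> h [s hs]; exists s; exact: cong_trans h hs.
apply: (QC _ _ (ez n)).
apply: (big_ind Q) => //; first by exists 0; rewrite mulr0; apply: cong_refl.
move=> k _; apply: QM.
case: (H k) => _ [[_ [s [_ hs]]] [_ [t [_ ht]]]].
rewrite vtE; apply: (QC _ _ (cong_vt pr ha hb (hs n) (ht n))).
rewrite vt_Pi /Q.
case: (leqP e 0) => e0.
  have -> : e = 0%N by apply/eqP; rewrite -leqn0.
  by exists (Th (s n) (t n)); rewrite addn0; apply: cong_refl.
have e1 : e = 1%N by apply/eqP; rewrite eqn_leq he e0.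
have : (p%:Z %| (Th (s n) (t n)).[1])%Z by rewrite Th1 -mulrA dvdz_mulr // hdiv.
case/Jlem => g [r hr]; exists g; rewrite e1 hr addn1 exprSr.
apply: (@cong_Phi p n _ _ (Pi ^+ (i + j) * r)); ring.
Qed.

End Main.


Lemma bez (p : nat) (c : int) : prime p -> ~~ (p%:Z %| c)%Z ->
  exists u v : int, u * c + v * p%:Z = 1.
Proof.
move=> pr hn.
have : coprimez c p.
  have h1 : coprime p `|c| by rewrite prime_coprime //; move: hn; rewrite unfold_in /dvdz.
  by rewrite /coprimez /gcdz /= gcdnC.
case/coprimezP => -[u v] /= h; by exists u, v.
Qed.

Lemma compPi e : Pi \Po 'X^e = Pi * E e.
Proof. by rewrite /Pi rmorphB /= rmorph1 comp_polyX -PiE. Qed.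

Section SpanB.
Variable p : nat.
Hypothesis pr : prime p.
Variable a : nat.
Hypothesis ha : (0 < a < p)%N.
Hypothesis hb : (0 < p + 1 - a < p)%N.
Hypothesis hab : (a <= p + 1 - a)%N.
Hypothesis hc : (0 < p + 1 - a - a < p)%N.
Variables i j : nat.
Local Notation b := (p + 1 - a)%N.
Local Notation c := (p + 1 - a - a)%N.
Local Notation span := (thetaSpan p a i j).

Lemma cong_one_exp n f k : congO p n f 1 -> congO p n (f ^+ k) 1.
Proof.
move=> h; elim: k => [|k IH]; first by rewrite expr0; apply: cong_refl.
by rewrite exprS -[1](mulr1 1); apply: congM.
Qed.

Lemma pideal_const k s : pideal p k (fun _ => Pi ^+ k * s).
Proof.
split; first exact: isO_const.
exists (fun _ => s); split; first exact: isO_const.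
move=> n; exact: cong_refl.
Qed.

Lemma span_top : span (fun _ => Pi ^+ (i + j + 1)).
Proof.
have hi := pideal_const i 1; have hj := pideal_const j 1; have hj' := pideal_const j 'X.
have hw := span_add (span_gen pr ha hb hi hj')
   (span_mul pr ha (isO_const _ (- 'X^a)) (span_gen pr ha hb hi hj)).
case: (Einv pr ha) => Fa [ra hra].
case: (Einv pr hb) => Fb [rb hrb].
case: (Einv pr hc) => Fc [rc hrc].
pose V := 'X^(p - a) * Fa ^+ i * Fb ^+ j * Fc.
have hV := span_mul pr ha (isO_const _ (- V)) hw.
apply: span_eq hV (isO_const _ _) _ => n.
rewrite /mulO !vtE /vt !rmorphM /= !rmorphXn /= !comp_polyX !compPi !rmorph1.
have eb : 'X^b = 'X^a * 'X^c :> {poly int} by rewrite -exprD subnKC.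
have ep : 'X^p = 'X^a * 'X^(p - a) :> {poly int}.
  by rewrite -exprD subnKC //; case/andP: ha => _ /ltnW.
have hX : 'X^c = 1 - Pi * E c by rewrite PiE; ring.
apply: (@cong_trans p n _ (Pi ^+ (i + j + 1) * ('X^p * (E a * Fa) ^+ i * (E b * Fb) ^+ j * (E c * Fc)))).
  apply: (@cong_Phi p n _ _ 0); rewrite mulr0; apply/eqP; rewrite subr_eq0; apply/eqP.
  rewrite /V eb hX ep !mulr1 !exprMn (exprD _ (i + j) 1) expr1 exprD; ring.
apply: (@cong_trans p n _ (Pi ^+ (i + j + 1) * 1)); last by rewrite mulr1; apply: cong_refl.
apply: congMl; rewrite -[1](mulr1 1); apply: congM; last first.
  by apply: (@cong_Phi p n _ _ rc); rewrite hrc.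
rewrite -[1](mulr1 1); apply: congM; last first.
  by apply: cong_one_exp; apply: (@cong_Phi p n _ _ rb); rewrite hrb.
rewrite -[1](mulr1 1); apply: congM; last first.
  by apply: cong_one_exp; apply: (@cong_Phi p n _ _ ra); rewrite hra.
apply: (@cong_Phi p n _ _ ('X - 1)); rewrite Phi_tel; ring.
Qed.

Lemma span_bot :
  ~~ (p%:Z %| (a ^ i * b ^ j)%N%:Z - (b ^ i * a ^ j)%N%:Z)%Z ->
  span (fun _ => Pi ^+ (i + j)).
Proof.
move=> hn; case: (bez pr hn) => u [v huv].
have hi := pideal_const i 1; have hj := pideal_const j 1.
have hw := span_gen pr ha hb hi hj.
have : root (Th p a i j 1 1 - ((Th p a i j 1 1).[1])%:P) 1.
  by rewrite /root hornerD hornerN hornerC subrr.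
case/factor_theorem => q hq.
case: (pPhi p) => T hT.
have hs := span_add (span_mul pr ha (isO_const _ (u%:P)) hw)
  (span_mul pr ha (isO_const _ (u%:P * q + v%:P * T)) span_top).
apply: span_eq hs (isO_const _ _) _ => n.
rewrite /mulO vtE vt_Pi.
have -> : Th p a i j 1 1 = Th p a i j 1 1 - ((Th p a i j 1 1).[1])%:P + ((Th p a i j 1 1).[1])%:P
  by rewrite subrK.
rewrite hq Th1 hornerC !mulr1.
set cN := (_ - _ : int).
apply: (@cong_Phi p n _ _ (- (v%:P * Pi ^+ (i + j)))).
apply/eqP; rewrite -subr_eq0; apply/eqP.
transitivity (Pi ^+ (i + j) * ((u * cN + v * p%:Z)%:P - 1)).
  rewrite [in RHS]polyCD ![in RHS]polyCM hT (exprD _ (i + j) 1) expr1 /Pi; ring.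
by rewrite huv subrr mulr0.
Qed.


Lemma spanB (e : nat) z : (e <= 1)%N ->
  (e = 0%N -> ~~ (p%:Z %| (a ^ i * b ^ j)%N%:Z - (b ^ i * a ^ j)%N%:Z)%Z) ->
  pideal p (i + j + e) z -> span z.
Proof.
move=> he hn [hz [y [hy ey]]].
have hg : span (fun _ => Pi ^+ (i + j + e)).
  case: e he hn ey => [|[|//]] _ hn _; last exact: span_top.
  by apply: span_ext (span_bot (hn erefl)) _ => n; rewrite addn0.
apply: span_eq (span_mul pr ha hy hg) hz _ => n.
rewrite /mulO mulrC; apply: cong_sym; exact: ey.
Qed.

End SpanB.


Lemma crit p a oa i j : prime p -> (0 < a < p)%N -> (0 < p + 1 - a < p)%N ->
  oa.-primitive_root ((a%:R : 'F_p) / (1 - a%:R)) ->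
  dvdz oa (i%:Z - j%:Z) =
  (p%:Z %| (a ^ i * (p + 1 - a) ^ j)%N%:Z - ((p + 1 - a) ^ i * a ^ j)%N%:Z)%Z.
Proof.
move=> pr ha hb hprim.
rewrite -eqz_mod_dvd !modz_nat eqz_nat -Fp_eq // !natrM !natrX.
set A := (a%:R : 'F_p); set B := ((p + 1 - a)%:R : 'F_p).
have hB : B = 1 - A.
  have hp0 : (p%:R : 'F_p) = 0.
    by apply/eqP; rewrite -[0]/(0%:R) Fp_eq // modnn mod0n.
  rewrite /B natrB; last by case/andP: ha => _ /ltnW /leqW; rewrite addn1.
  by rewrite natrD hp0 add0r.
have A0 : A != 0 by exact: Fp_neq0.
have B0 : B != 0 by exact: Fp_neq0.
rewrite -hB in hprim.
rewrite /dvdz /=.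
wlog hij : i j / (j <= i)%N.
  move=> hw; case: (leqP j i) => h; first exact: hw.
  rewrite distnC hw; last exact: ltnW.
  by rewrite eq_sym [A ^+ j * _]mulrC [B ^+ j * _]mulrC.
rewrite distnEl // (prim_order_dvd hprim) exprMn exprVn.
have -> : (A ^+ (i - j) / B ^+ (i - j) == 1) = (A ^+ (i - j) == B ^+ (i - j)).
  apply/eqP/eqP => h.
    by rewrite -(divfK (expf_neq0 (i - j) B0) (A ^+ (i - j))) h mul1r.
  by rewrite h mulfV // expf_neq0.
set d := (i - j)%N.
have ei : i = (d + j)%N by rewrite /d subnK.
rewrite ei !exprD.
have hAB : (A * B) ^+ j != 0 by rewrite expf_neq0 // mulf_neq0.
apply/eqP/eqP => h.
  by rewrite h; ring.
apply: (mulfI hAB); rewrite !exprMn.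
transitivity (A ^+ d * A ^+ j * B ^+ j); first by ring.
rewrite h; ring.
Qed.

End Aux.
Import Aux.

Theorem lemma2p3 (p a oa : nat) :
  prime p -> (5 <= p)%N -> (2 <= a <= (p - 1)./2)%N ->
  (* oa = multiplicative order of a (1 - a)^-1 in (Z/pZ)^* *)
  oa.-primitive_root ((a%:R : 'F_p) / (1 - a%:R)) ->
  (forall (i j : nat) (z : Oseq),
     thetaSpan p a i j z <->
     pideal p (i + j + (if dvdz oa (i%:Z - j%:Z) then 1 else 0))%N z)
  /\ (forall (i : nat) (z : Oseq), thetaSpan p a i i z <-> pideal p (2 * i + 1)%N z)
  /\ (forall x y : Oseq, isO p x -> isO p y ->
        eqO p (varthetaO p a (mulO thetaO x) (mulO thetaO y))
              (mulO thetaO (varthetaO p a x y))).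
Proof.
move=> pr p5 /andP[a2 ah] hprim.
rewrite geq_half_double in ah.
have ha : (0 < a < p)%N by apply/andP; split; lia.
have hb : (0 < p + 1 - a < p)%N by apply/andP; split; lia.
have hab : (a <= p + 1 - a)%N by lia.
have hc : (0 < p + 1 - a - a < p)%N by apply/andP; split; lia.
have main : forall (i j : nat) (z : Oseq),
     thetaSpan p a i j z <->
     pideal p (i + j + (if dvdz oa (i%:Z - j%:Z) then 1 else 0))%N z.
  move=> i j z; rewrite (crit _ _ pr ha hb hprim).
  split.
    apply: (spanA pr ha hb); first by case: ifP.
    by case: ifP => // _.
  apply: (spanB pr ha hb hab hc); first by case: ifP.
  by case: ifP => // h _; rewrite h.
split; first exact: main.
split.
  move=> i z; have := main i i z; rewrite subrr /dvdz /= dvdn0.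
  by have -> : (i + i + 1 = 2 * i + 1)%N by lia.
move=> x y _ _ n; case: (vtX ha (x n) (y n)) => r hr.
exact: (@cong_Phi p n _ _ r).
Qed.
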